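(* Let $\nabla$ be a metric connection on an anchored metric bundle $(E,\langle\cdot,\cdot\rangle,a_E)$ over $M$, with associated bracket $\circ=\circ^\nabla$. Then for all $e_1,e_2,e_3\in\Gamma(E)$, $$C^\nabla(e_1,e_2)e_3+C^\nabla(e_2,e_3)e_1+C^\nabla(e_3,e_1)e_2+\nabla_{\Delta_{e_3}e_2}e_1+\nabla_{\Delta_{e_1}e_3}e_2+\nabla_{\Delta_{e_2}e_1}e_3+Q(e_1,e_2,e_3)+\big(\mathcal{D}\langle e_1,e_3\rangle\big)\circ e_2$$ $$=e_1\circ(e_2\circ e_3)-(e_1\circ e_2)\circ e_3-e_2\circ(e_1\circ e_3).$$
   Context: Anchored metric bundle: vector bundle $E\to M$, pseudo-metric $\langle\cdot,\cdot\rangle$ (nondegenerate symmetric), bundle map $a_E:E\to TM$. Metric connection: $\mathbb{R}$-bilinear $\nabla$ with $\nabla_{fe_1}e_2=f\nabla_{e_1}e_2$, $\nabla_{e_1}(fe_2)=a_E(e_1)(f)e_2+f\nabla_{e_1}e_2$, $a_E(e_1)\langle e_2,e_3\rangle=\langle\nabla_{e_1}e_2,e_3\rangle+\langle e_2,\nabla_{e_1}e_3\rangle$. $\Delta$: $\langle\Delta_{e_2}e_1,e_3\rangle=\langle\nabla_{e_3}e_1,e_2\rangle$; $e_1\circ^\nabla e_2=\nabla_{e_1}e_2-\nabla_{e_2}e_1+\Delta_{e_2}e_1$. $\mathcal{D}$: $\langle\mathcal{D}(f),e\rangle=a_E(e)(f)$. $C^\nabla(e_1,e_2)=\nabla_{e_1}\nabla_{e_2}-\nabla_{e_2}\nabla_{e_1}-\nabla_{e_1\circ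 e_2}$. $Q$: $\langle Q(e_1,e_2,e_3),t\rangle=\langle C^\nabla(e_1,t)e_2,e_3\rangle+\langle C^\nabla(e_2,t)e_3,e_1\rangle+\langle C^\nabla(e_3,t)e_1,e_2\rangle$ for all $t\in\Gamma(E)$. *)

(* Defs.v *)
(* Algebraic model of an anchored metric bundle:
   F = the reals, A = C^oo(M) (a commutative F-algebra), V = Gamma(E)
   (an A-module). *)
From HB Require Import structures.
From mathcomp Require Import all_boot all_order all_algebra.
From mathcomp Require Import reals.
Set Implicit Arguments. Unset Strict Implicit. Unset Printing Implicit Defensive.
Import Order.TTheory GRing.Theory Num.Theory.
Local Open Scope ring_scope.

Section AMB.
Variables (F : realType) (A : comAlgType F) (V : lmodType A).

(* a_E : E -> TM, a bundle map; a e acts on functions as an F-linear derivation *)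
Definition anchor_ax (a : V -> A -> A) : Prop :=
  [/\ (forall e f g, a e (f + g) = a e f + a e g),
      (forall e (k : F) f, a e (k *: f) = k *: a e f),
      (forall e f g, a e (f * g) = a e f * g + f * a e g),
      (forall e1 e2 g, a (e1 + e2) g = a e1 g + a e2 g)
    & (forall (f : A) e g, a (f *: e) g = f * a e g)].

Definition metric_ax (p : V -> V -> A) : Prop :=
  [/\ (forall e1 e2, p e1 e2 = p e2 e1),
      (forall e1 e2 e3, p (e1 + e2) e3 = p e1 e3 + p e2 e3),
      (forall (f : A) e1 e2, p (f *: e1) e2 = f * p e1 e2)
    & (forall x, (forall t, p x t = 0) -> x = 0)].

Definition metric_connection (a : V -> A -> A) (p : V -> V -> A)
    (nab : V -> V -> V) : Prop :=
  [/\ (forall e1 e2 e3, nab (e1 + e2) e3 = nab e1 e3 + nab e2 e3),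
      (forall e1 e2 e3, nab e1 (e2 + e3) = nab e1 e2 + nab e1 e3),
      (forall (f : A) e1 e2, nab (f *: e1) e2 = f *: nab e1 e2),
      (forall (f : A) e1 e2, nab e1 (f *: e2) = a e1 f *: e2 + f *: nab e1 e2)
    & (forall e1 e2 e3, a e1 (p e2 e3) = p (nab e1 e2) e3 + p e2 (nab e1 e3))].

(* Delta : <Delta_{e2} e1, e3> = <nabla_{e3} e1, e2>;  Delta e2 e1 = Delta_{e2} e1 *)
Definition Delta_ax (p : V -> V -> A) (nab : V -> V -> V) (Delta : V -> V -> V) :=
  forall e1 e2 e3, p (Delta e2 e1) e3 = p (nab e3 e1) e2.

Definition D_ax (a : V -> A -> A) (p : V -> V -> A) (D : A -> V) :=
  forall f e, p (D f) e = a e f.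

Definition bracket (nab : V -> V -> V) (Delta : V -> V -> V) (e1 e2 : V) : V :=
  nab e1 e2 - nab e2 e1 + Delta e2 e1.

Definition curv (nab : V -> V -> V) (Delta : V -> V -> V) (e1 e2 e3 : V) : V :=
  nab e1 (nab e2 e3) - nab e2 (nab e1 e3) - nab (bracket nab Delta e1 e2) e3.

Definition Q_ax (p : V -> V -> A) (nab : V -> V -> V) (Delta : V -> V -> V)
    (Q : V -> V -> V -> V) :=
  forall e1 e2 e3 t,
    p (Q e1 e2 e3) t = p (curv nab Delta e1 t e2) e3
                     + p (curv nab Delta e2 t e3) e1
                     + p (curv nab Delta e3 t e1) e2.
End AMB.

(* Main.v *)
Require Import Defs.
From HB Require Import structures.
From mathcomp Require Import all_boot all_order all_algebra.
From mathcomp Require Import reals.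
From mathcomp Require Import ring.
Import Order.TTheory GRing.Theory Num.Theory.
Local Open Scope ring_scope.

Theorem proposition3p10 (F : realType) (A : comAlgType F) (V : lmodType A)
  (a : V -> A -> A) (p : V -> V -> A) (nab : V -> V -> V)
  (Delta : V -> V -> V) (D : A -> V) (Q : V -> V -> V -> V) :
  anchor_ax a -> metric_ax p -> metric_connection a p nab ->
  Delta_ax p nab Delta -> D_ax a p D -> Q_ax p nab Delta Q ->
  forall e1 e2 e3 : V,
    curv nab Delta e1 e2 e3 + curv nab Delta e2 e3 e1 + curv nab Delta e3 e1 e2
    + nab (Delta e3 e2) e1 + nab (Delta e1 e3) e2 + nab (Delta e2 e1) e3
    + Q e1 e2 e3 + bracket nab Delta (D (p e1 e3)) e2
    = bracket nab Delta e1 (bracket nab Delta e2 e3)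
      - bracket nab Delta (bracket nab Delta e1 e2) e3
      - bracket nab Delta e2 (bracket nab Delta e1 e3).
Proof.
move=> [aD aZ aM aDe aZe] [pC pDl pZ pnd] [nDl nDr nZl nZr nmet] HDel HD HQ e1 e2 e3.
have nNl x y : nab (- x) y = - nab x y.
  by apply/eqP; rewrite -addr_eq0 -nDl addNr; apply/eqP; apply: (@addrI _ (nab 0 y)); rewrite -nDl !addr0.
have nNr x y : nab x (- y) = - nab x y.
  by apply/eqP; rewrite -addr_eq0 -nDr addNr; apply/eqP; apply: (@addrI _ (nab x 0)); rewrite -nDr !addr0.
have pNl x y : p (- x) y = - p x y.
  by apply/eqP; rewrite -addr_eq0 -pDl addNr; apply/eqP; apply: (@addrI _ (p 0 y)); rewrite -pDl !addr0.
have pDr x y z : p x (y + z) = p x y + p x z by rewrite pC pDl pC [p z x]pC.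
have pNr x y : p x (- y) = - p x y by rewrite pC pNl pC.
apply/eqP; rewrite -subr_eq0; apply/eqP; apply: (pnd) => t.
rewrite pDl pNl; apply/eqP; rewrite subr_eq0; apply/eqP.
rewrite /bracket /curv.
rewrite !(nDl, nDr, nNl, nNr, opprD, opprK).
rewrite !(pDl, pNl) HQ /curv /bracket.
rewrite !(nDl, nDr, nNl, nNr, opprD, opprK).
rewrite !(pDl, pNl, pDr, pNr).
have Dl x y z : p (Delta y x) z = p (nab z x) y := HDel x y z.
have Dr x y z : p z (Delta y x) = p (nab z x) y by rewrite pC.
rewrite !(Dl, Dr).
rewrite !(pDl, pNl, pDr, pNr, nDl, nDr, nNl, nNr, opprD, opprK).
rewrite !(Dl, Dr).
have M2 x y z w : p (nab x (nab y z)) w = a x (p (nab y z) w) - p (nab y z) (nab x w).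
  by rewrite nmet addrK.
have MD x f w : p (nab x (D f)) w = a x (a w f) - a (nab x w) f.
  by rewrite -[a w f]HD -[a (nab x w) f]HD nmet addrK.
have DD x y : Delta x y + Delta y x = D (p x y).
  apply/eqP; rewrite -subr_eq0; apply/eqP; apply: (pnd) => z.
  rewrite pDl pNl pDl Dl Dl HD nmet [p x (nab z y)]pC; ring.
have D31 : Delta e3 e1 = D (p e1 e3) - Delta e1 e3.
  by rewrite -DD addrAC subrr add0r.
have SW x y z : p (nab (Delta t x) y) z = p (nab (Delta z y) x) t.
  by rewrite -Dl pC Dl.
have MDe x u v w : p (nab x (Delta u v)) w = a x (p (nab w v) u) - p (nab (nab x w) v) u.
  by rewrite -[p (nab (nab x w) v) u]Dl -[p (nab w v) u]Dl nmet addrK.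
rewrite D31 !(nDl, nNl, nDr, nNr, pDl, pNl, opprD, opprK).
rewrite !(M2, MD, SW, MDe).
rewrite (nmet e2 e1 e3) (nmet (nab t e2) e1 e3) aD.
rewrite [p (nab (nab t e2) e3) e1]pC [p (nab e2 e1) (nab t e3)]pC [p (nab e2 e3) (nab t e1)]pC [p (nab e2 e3) e1]pC [p (nab e3 e1) (nab t e2)]pC.
ring.
Qed.
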